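(* For all positive integers $n$ and $k$, \[ |\mathrm{Hom}^1(P_n,P_k)| = \sum_{j\in\mathbb Z}\left(\binom{n-1}{\lceil (n-1)/2\rceil - j(k+1)} - \binom{n-1}{\lfloor (n+k)/2\rfloor - j(k+1)}\right). \]
   Context: For a positive integer $m$, $P_m$ denotes the path with vertex set $[m]=\{1,\dots,m\}$ in which $i$ and $j$ are adjacent iff $|i-j|=1$; $\mathrm{Hom}(P_n,P_k)$ is the set of maps $f:[n]\to[k]$ with $|f(i)-f(i+1)|=1$ for $1\le i\le n-1$, and $\mathrm{Hom}^1(P_n,P_k)=\{f\in\mathrm{Hom}(P_n,P_k): f(1)=1\}$. Convention: $\binom{a}{b}=0$ if $b<0$ or $b>a$. *)

(* Defs.v *)
From HB Require Import structures.
From mathcomp Require Import all_boot all_order all_algebra.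
Set Implicit Arguments. Unset Strict Implicit. Unset Printing Implicit Defensive.
Import Order.TTheory GRing.Theory Num.Theory.

(* Vertex set [m] = {1,...,m} of P_m is encoded by 'I_m : the ordinal v
   stands for the vertex v+1.  Adjacency |i - j| = 1 is invariant under
   this shift. *)
Definition adjP (a b : nat) : bool := (a == b.+1) || (b == a.+1).

Definition Hom1 (n k : nat) : {set {ffun 'I_n -> 'I_k}} :=
  [set f : {ffun 'I_n -> 'I_k} |
     [forall i : 'I_n, forall j : 'I_n,
        (val j == (val i).+1) ==> adjP (f i) (f j)]
     && [forall i : 'I_n, (val i == 0) ==> (val (f i) == 0)]].

(* binomial coefficient binom(a, b) for b an integer, with the convention
   binom(a,b) = 0 if b < 0 or b > a (the latter is built into 'C). *)
Definition binZ (a : nat) (b : int) : int :=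
  match b with
  | Posz m => ('C(a, m))%:Z
  | Negz _ => 0%R
  end.

Definition hom_term (n k : nat) (j : int) : int :=
  (binZ n.-1 ((uphalf n.-1)%:Z - j * (k.+1)%:Z)
   - binZ n.-1 (((n + k)./2)%:Z - j * (k.+1)%:Z))%R.

Definition sym_sum (N : nat) (F : int -> int) : int :=
  (\sum_(i < (N.*2).+1) F (i%:Z - N%:Z))%R.

(* Main.v *)
Require Import Defs.
From HB Require Import structures.
From mathcomp Require Import all_boot all_order all_algebra.
From mathcomp Require Import zify ring.
Set Implicit Arguments. Unset Strict Implicit. Unset Printing Implicit Defensive.
Import Order.TTheory GRing.Theory Num.Theory.
Local Open Scope ring_scope.

Fixpoint A (m : nat) (x : int) : int :=
  match m with
  | 0%N => (x == 0)%:R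
  | m'.+1 => A m' (x - 1) + A m' (x + 1)
  end.

Lemma binZ_pascal (m : nat) (c : int) :
  binZ m.+1 c = binZ m (c - 1) + binZ m c.
Proof.
case: c => [[|c]|c].
- by rewrite /= !bin0.
- have -> : (Posz c.+1 - 1) = Posz c by lia.
  by rewrite /= binS PoszD addrC.
- by have -> : (Negz c - 1) = Negz c.+1 by lia.
Qed.

Lemma A_par (m : nat) (c : int) : A m (2 * c - m%:Z + 1) = 0.
Proof.
elim: m c => [|m IH] c /=.
  have /negbTE -> : (2 * c - 0 + 1 != 0 :> int) by lia.
  by [].
have -> : 2 * c - m.+1%:Z + 1 - 1 = 2 * (c - 1) - m%:Z + 1 by lia.
have -> : 2 * c - m.+1%:Z + 1 + 1 = 2 * c - m%:Z + 1 by lia.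
by rewrite !IH addr0.
Qed.

Lemma A_bin (m : nat) (c : int) : A m (2 * c - m%:Z - 1) + A m (2 * c - m%:Z) = binZ m c.
Proof.
elim: m c => [|m IH] c /=.
  have [->|c0] := eqVneq c 0; first by [].
  have h1 : (2 * c - 0%:Z - 1 == 0) = false by apply/negbTE; lia.
  have h2 : (2 * c - 0%:Z == 0) = false by apply/negbTE; lia.
  rewrite h1 h2 addr0.
  by case: c c0 {h1 h2} => [[|c]|c].
rewrite binZ_pascal -IH -IH.
have -> : 2 * c - m.+1%:Z - 1 - 1 = 2 * (c - 1) - m%:Z - 1 by lia.
have -> : 2 * c - m.+1%:Z - 1 + 1 = 2 * c - m%:Z - 1 by lia.
have -> : 2 * c - m.+1%:Z - 1 = 2 * (c - 1) - m%:Z by lia.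
have -> : 2 * c - m.+1%:Z + 1 = 2 * c - m%:Z by lia.
ring.
Qed.

Lemma A_ceil (m : nat) (x c : int) : (2 * c = m%:Z + x) \/ (2 * c = m%:Z + x + 1) ->
  A m x + A m (x + 1) = binZ m c.
Proof.
case=> h.
- have -> : x = 2 * c - m%:Z by lia.
  rewrite A_par addr0 -A_bin.
  have -> : 2 * c - m%:Z - 1 = 2 * (c - 1) - m%:Z + 1 by lia.
  by rewrite A_par add0r.
- rewrite -A_bin.
  have -> : x = 2 * c - m%:Z - 1 by lia.
  by rewrite subrK.
Qed.

Lemma A_sym (m : nat) (x : int) : A m (- x) = A m x.
Proof.
elim: m x => [|m IH] x /=.
  by rewrite oppr_eq0.
rewrite addrC; congr (_ + _).
- by rewrite -IH; congr A; lia.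
- by rewrite -IH; congr A; lia.
Qed.

Lemma A_supp (m : nat) (x : int) : (m%:Z < x) -> A m x = 0.
Proof.
elim: m x => [|m IH] x /= h.
  by have /negbTE -> : (x != 0) by lia.
by rewrite !IH ?addr0 //; lia.
Qed.

Lemma A_supp' (m : nat) (x : int) : (x < - m%:Z) -> A m x = 0.
Proof. move=> h; rewrite -A_sym A_supp //; lia. Qed.

Definition S (N : nat) (g : int -> int) : int := \sum_(i < (N.*2).+1) g (i%:Z - N%:Z).

Lemma S_eq N g h : (forall j, g j = h j) -> S N g = S N h.
Proof. by move=> e; apply: eq_bigr => i _. Qed.

Lemma S_neg N g : S N g = S N (fun j => g (- j)).
Proof.
rewrite /S (reindex_inj rev_ord_inj) /=; apply: eq_bigr => i _; congr g.
have hi := ltn_ord i.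
rewrite subSS.
move: (i : nat) hi => i' hi; rewrite -muln2 in hi *; lia.
Qed.

Lemma S_shift N g : S N (fun j => g (j + 1)) = S N g - g (- N%:Z) + g (N%:Z + 1).
Proof.
rewrite /S big_ord_recr big_ord_recl /=.
have -> : (N.*2%:Z - N%:Z + 1) = N%:Z + 1 by rewrite -muln2; lia.
rewrite sub0r [g (- _) + _]addrC addrK; congr (_ + _).
by apply: eq_bigr => i _; congr g; rewrite /bump /=; lia.
Qed.

Lemma S_split N g h : S N (fun j => g j - h j) = S N g - S N h.
Proof. by rewrite /S sumrB. Qed.

Definition Kz (k : nat) : int := (k.+1)%:Z.
Definition F k N m (y : int) :=
  S N (fun j => A m (y - 2 * j * Kz k) - A m (y + 2 - 2 * j * Kz k)).

Lemma F_rec k N m y : F k N m.+1 y = F k N m (y - 1) + F k N m (y + 1).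
Proof.
rewrite /F /S -big_split /=; apply: eq_bigr => i _ /=.
set c := 2 * _ * _.
have -> : y - c - 1 = y - 1 - c by ring.
have -> : y - c + 1 = y + 1 - c by ring.
have -> : y + 2 - c - 1 = y - 1 + 2 - c by ring.
have -> : y + 2 - c + 1 = y + 1 + 2 - c by ring.
ring.
Qed.

Lemma F_lo k N m : F k N m (-1) = 0.
Proof.
rewrite /F S_split [X in _ - X]S_neg.
rewrite (@S_eq N (fun j => A m (-1 + 2 - 2 * - j * Kz k)) (fun j => A m (-1 - 2 * j * Kz k))) ?subrr //.
by move=> j; rewrite -A_sym; congr A; ring.
Qed.

Lemma F_hi k N m : (m < N)%N -> F k N m k = 0.
Proof.
move=> hmN.
rewrite /F S_split.
set h := fun j => A m (k%:Z - 2 * j * Kz k).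
rewrite (@S_eq N (fun j => A m (k%:Z + 2 - 2 * j * Kz k)) (fun j => h (- j + 1))); last first.
  by move=> j; rewrite /h -A_sym; congr A; rewrite /Kz; ring.
rewrite -(S_neg N (fun j => h (j + 1))) S_shift.
have e1 : h (- N%:Z) = 0 by rewrite /h A_supp // /Kz; nia.
have e2 : h (N%:Z + 1) = 0 by rewrite /h A_supp' // /Kz; nia.
by rewrite e1 e2 subr0 addr0 subrr.
Qed.

Lemma F0 k N y : (0 <= y) -> (y < k%:Z) -> F k N 0 y = (y == 0)%:R.
Proof.
move=> h0 hk.
have hN : (N < (N.*2).+1)%N by rewrite ltnS -addnn leq_addr.
rewrite /F /S (bigD1 (Ordinal hN)) //= big1.
  rewrite subrr mulr0 mul0r !subr0 ?addr0.
  have -> : (y + 2 == 0) = false by apply/negbTE; lia.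
  by rewrite subr0.
move=> i hi.
have hi' : (i : nat) != N by apply: contra hi => /eqP e; apply/eqP/val_inj.
have hd : (i%:Z - N%:Z >= 1) \/ (i%:Z - N%:Z <= -1) by lia.
rewrite /Kz.
have -> : (y - 2 * (i%:Z - N%:Z) * k.+1%:Z == 0) = false by apply/negbTE; case: hd => hd; nia.
have -> : (y + 2 - 2 * (i%:Z - N%:Z) * k.+1%:Z == 0) = false by apply/negbTE; case: hd => hd; nia.
by rewrite subrr.
Qed.

Lemma tele (g : int -> int) (k : nat) :
  \sum_(y < k) (g y%:Z - g (y%:Z + 2)) = g 0 + g 1 - g k%:Z - g (k%:Z + 1).
Proof.
elim: k => [|k IH]; first by rewrite big_ord0; ring.
rewrite big_ord_recr /= IH.
have -> : (k%:Z + 2) = (k.+1%:Z + 1) by lia.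
have -> : k%:Z + 1 = k.+1%:Z by lia.
ring.
Qed.

Lemma total k N m :
  \sum_(y < k) F k N m y%:Z =
  S N (fun j => A m (- (2 * j * Kz k)) + A m (- (2 * j * Kz k) + 1)
              - (A m (k%:Z - 2 * j * Kz k) + A m (k%:Z - 2 * j * Kz k + 1))).
Proof.
rewrite /F /S exchange_big /=; apply: eq_bigr => i _.
set c := 2 * _ * _.
rewrite (tele (fun z => A m (z - c))) /=.
rewrite sub0r; have -> : 1 - c = - c + 1 by ring.
have -> : k%:Z + 1 - c = k%:Z - c + 1 by ring.
ring.
Qed.

Lemma term n k j : (0 < n)%N ->
  hom_term n k j = A n.-1 (- (2 * j * Kz k)) + A n.-1 (- (2 * j * Kz k) + 1)
              - (A n.-1 (k%:Z - 2 * j * Kz k) + A n.-1 (k%:Z - 2 * j * Kz k + 1)).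
Proof.
case: n => [//|m] _ /=.
rewrite /hom_term /=.
rewrite (@A_ceil m (- (2 * j * Kz k)) ((uphalf m)%:Z - j * k.+1%:Z)); last first.
  have h := odd_double_half m; rewrite uphalf_half /Kz.
  rewrite -muln2 in h; case: (odd m) h => /= h; lia.
rewrite (@A_ceil m (k%:Z - 2 * j * Kz k) ((uphalf (m + k))%:Z - j * k.+1%:Z)) //.
have h := odd_double_half (m + k); rewrite uphalf_half /Kz.
rewrite -muln2 in h; case: (odd _) h => /= h; lia.
Qed.
Local Close Scope ring_scope.

Lemma sum_eqn (a k : nat) : \sum_(y < k) (a == y) = (a < k).
Proof.
elim: k => [|k IH]; first by rewrite big_ord0.
rewrite big_ord_recr /= IH.
have [h|h|->] := ltngtP a k.
- by rewrite ltnS ltnW.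
- by rewrite ltnS leqNgt h.
- by rewrite ltnS leqnn.
Qed.

Lemma part (T : finType) (B : {set T}) (g : T -> nat) (k : nat) :
  (forall x, x \in B -> g x < k) -> #|B| = \sum_(y < k) #|[set x in B | g x == y]|.
Proof.
move=> hg.
rewrite -sum1_card.
rewrite (eq_bigr (fun x => \sum_(y < k) (g x == y))); last first.
  by move=> x hx; rewrite sum_eqn hg.
rewrite exchange_big /=; apply: eq_bigr => y _.
rewrite -sum1_card big_mkcond [RHS]big_mkcond; apply: eq_bigr => x _.
by rewrite inE; case: (x \in B); case: (g x == y).
Qed.


Lemma HomP n k (f : {ffun 'I_n -> 'I_k}) : f \in Hom1 n k <->
  ((forall i j : 'I_n, val j = (val i).+1 -> adjP (f i) (f j)) /\
   (forall i : 'I_n, val i = 0 -> val (f i) = 0)).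
Proof.
rewrite inE; split.
  move=> /andP[/forallP h1 /forallP h2]; split.
    move=> i j e; move/forallP: (h1 i) => /(_ j) /implyP; apply; exact/eqP.
  by move=> i e; apply/eqP; apply: (implyP (h2 i)); apply/eqP.
case=> h1 h2; apply/andP; split; apply/forallP => i; [apply/forallP => j|];
  apply/implyP => /eqP e; [exact: h1 | apply/eqP; exact: h2].
Qed.

Definition cnt (k m y : nat) := #|[set f in Hom1 m.+1 k | val (f ord_max) == y]|.

Lemma cnt0 k y : y < k -> cnt k 0 y = (y == 0).
Proof.
move=> hy; rewrite /cnt; case: (eqVneq y 0) => [ey|ny].
- subst y.
  pose f0 : {ffun 'I_1 -> 'I_k} := [ffun => Ordinal hy].
  rewrite (_ : [set f in Hom1 1 k | val (f ord_max) == 0] = [set f0]) ?cards1 //.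
  apply/setP => f; rewrite !in_set1 ?in_set0 in_set; apply/idP/idP.
  + move=> /andP[_ /eqP h]; apply/eqP/ffunP => i; rewrite ffunE; apply/val_inj => /=.
    have -> : i = ord_max by apply: val_inj; case: i => [[|i'] hi] //=.
    exact h.
  + move=> /eqP ->; rewrite ffunE /= eqxx andbT; apply/HomP; split.
      by move=> i j e; have := ltn_ord j; rewrite e.
    by move=> i _; rewrite ffunE.
- apply/eqP; rewrite cards_eq0; apply/eqP/setP => f; rewrite in_set0 in_set.
  case hf: (f \in Hom1 1 k) => //=.
  move/HomP: hf => [_ h2]; rewrite (h2 ord_max) //.
  by rewrite eq_sym (negbTE ny).
Qed.

Definition res m k (f : {ffun 'I_m.+2 -> 'I_k}) : {ffun 'I_m.+1 -> 'I_k} :=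
  [ffun i => f (widen_ord (leqnSn _) i)].

Definition ext m k y (hy : y < k) (g : {ffun 'I_m.+1 -> 'I_k}) : {ffun 'I_m.+2 -> 'I_k} :=
  [ffun i : 'I_m.+2 => if val i < m.+1 then g (inord (val i)) else Ordinal hy].

Lemma cntS k m y : y < k -> cnt k m.+1 y = \sum_(y' < k) adjP y' y * cnt k m y'.
Proof.
move=> hy; rewrite /cnt.
set B := [set f in Hom1 m.+2 k | val (f ord_max) == y].
rewrite (@part _ B (fun f => val (res f ord_max)) k); last by move=> x _; exact: ltn_ord.
apply: eq_bigr => y' _.
case hadj: (adjP y' y); last first.
  rewrite mul0n; apply/eqP; rewrite cards_eq0; apply/eqP/setP => f.
  rewrite in_set0 in_set /B in_set.
  apply/negbTE/negP => /andP[/andP[/HomP[h1 _] /eqP hl] /eqP hp].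
  move: hadj; have := h1 (widen_ord (leqnSn _) ord_max) ord_max erefl.
  by rewrite /res ffunE in hp; rewrite hp hl => ->.
rewrite mul1n -(@card_in_imset _ _ (@res m k)).
- apply: eq_card => g; rewrite [in RHS]in_set; apply/imsetP/idP.
  + case=> f; rewrite in_set /B in_set => /andP[/andP[hf hl] hp] ->.
    apply/andP; split; last by [].
    apply/HomP; move/HomP: hf => [h1 h2]; split.
      by move=> i j e; rewrite !ffunE; apply: h1.
    by move=> i e; rewrite ffunE; apply: h2.
  + move=> /andP[hg hl]; exists (ext hy g); last first.
      apply/ffunP => i; rewrite !ffunE /= ltn_ord; congr (g _); apply/val_inj.
      by rewrite /= inordK.
    move/HomP: hg => [h1 h2].
    rewrite in_set /B in_set; apply/andP; split; [apply/andP; split|].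
    * apply/HomP; split.
        move=> i j e; rewrite !ffunE.
        have hj := ltn_ord j.
        case: (ltnP (val j) m.+1) => hjm.
          have hi : val i < m.+1 by apply: ltnW; rewrite -e.
          by rewrite hi; apply: h1 => /=; rewrite !inordK // -e.
        have ej : val j = m.+1 by apply/eqP; rewrite eqn_leq hjm -ltnS hj.
        have ei : val i = m by move: e; rewrite ej => -[].
        rewrite ei ltnSn /=.
        have -> : (inord m : 'I_m.+1) = ord_max by apply/val_inj; rewrite /= inordK.
        by rewrite (eqP hl) hadj.
      move=> i e; rewrite ffunE e /=.
      by apply: h2 => /=; rewrite inordK.
    * by rewrite ffunE /= ltnn.
    * rewrite /res !ffunE /= ltnSn.
      have -> : (inord m : 'I_m.+1) = ord_max by apply/val_inj; rewrite /= inordK.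
      exact hl.
- move=> f1 f2; rewrite /B !in_set => /andP[/andP[_ l1] _] /andP[/andP[_ l2] _] e.
  apply/ffunP => i; case: (ltnP (val i) m.+1) => hi.
    have := congr1 (fun h : {ffun 'I_m.+1 -> 'I_k} => h (Ordinal hi)) e; rewrite /res !ffunE.
    by have -> : widen_ord (leqnSn _) (Ordinal hi) = i by apply/val_inj.
  have -> : i = ord_max by apply/val_inj/eqP; rewrite eqn_leq hi -ltnS ltn_ord.
  by apply/val_inj; rewrite (eqP l1) (eqP l2).
Qed.

Local Open Scope ring_scope.

Lemma adj_sum (G : int -> int) (y k' : nat) :
  \sum_(y' < k') ((adjP y' y)%:R * G (y' : nat)%:Z) =
  (if (0 < y)%N && (y.-1 < k')%N then G (y%:Z - 1) else 0) +
  (if (y.+1 < k')%N then G (y%:Z + 1) else 0).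
Proof.
elim: k' => [|k' IH].
  by rewrite big_ord0 /=; case: (0 < y)%N; rewrite /= ?addr0.
rewrite big_ord_recr /= IH /adjP; clear IH.
case: (eqVneq k' y.+1) => [->|h1] /=.
  rewrite ltnn ltnSn /= mul1r.
  have -> : (y.-1 < y.+1)%N by case: y => //= y; rewrite ltnS ltnW.
  have -> : (y.-1 < y.+2)%N by case: y => //= y; rewrite !ltnS ltnW // ltnW.
  have -> : (y.+1)%:Z = y%:Z + 1 by lia.
  by rewrite addr0.
case: (eqVneq y k'.+1) => [->|h2] /=.
  rewrite ltnn ltnSn /= mul1r.
  have -> : (k'.+2 < k')%N = false by lia.
  have -> : (k'.+2 < k'.+1)%N = false by lia.
  have -> : k'.+1%:Z - 1 = k'%:Z by lia.
  by rewrite !addr0 add0r.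
rewrite mul0r addr0.
have -> : (y.-1 < k'.+1)%N = (y.-1 < k')%N || (0 == y)%N by lia.
have -> : (y.+1 < k'.+1)%N = (y.+1 < k')%N by lia.
by case: y {h1 h2} => [|y] //=; rewrite orbF.
Qed.

Lemma cntF k N m y : (m < N)%N -> (y < k)%N -> (cnt k m y)%:Z = F k N m y%:Z.
Proof.
elim: m y => [|m IH] y hm hy.
  rewrite cnt0 // F0; [by case: y {hy} | lia | lia].
rewrite cntS // -natz natr_sum.
rewrite (eq_bigr (fun y' : 'I_k => (adjP y' y)%:R * F k N m (y' : nat)%:Z)); last first.
  by move=> y' _; rewrite natrM [(cnt _ _ _)%:R]natz (IH _ (ltnW hm) (ltn_ord y')).
rewrite adj_sum F_rec.
congr (_ + _).
  case: y hy => [|y] hy /=; first by rewrite F_lo.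
  by rewrite ltnW.
case: ltnP => h //.
have -> : y%:Z + 1 = k%:Z by lia.
by rewrite F_hi // ltnW.
Qed.

Local Close Scope ring_scope.

Theorem mainTheorem4 (n k : nat) (hn : 0 < n) (hk : 0 < k) (N : nat) (hN : n <= N) :
  Posz #|Hom1 n k| = sym_sum N (hom_term n k).
Proof.
case: n hn hN => [//|m] _ hN.
rewrite (@part _ (Hom1 m.+1 k) (fun f => val (f ord_max)) k); last by move=> x _; exact: ltn_ord.
rewrite -natz natr_sum.
rewrite (eq_bigr (fun y : 'I_k => F k N m (y : nat)%:Z)); last first.
  by move=> y _; rewrite natz -(@cntF k N m y hN (ltn_ord y)).
rewrite total /sym_sum; apply: eq_bigr => i _.
by rewrite term.
Qed.
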